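(* Let $P$ and $Q$ be rhombuses whose vertices all lie on the integer lattice $\mathbb{Z}^2$, and suppose that $P$ and $Q$ form an amicable pair, i.e. the area of $P$ equals the perimeter of $Q$ and the area of $Q$ equals the perimeter of $P$. Then $P$ and $Q$ are both equable, i.e. the area of each equals its own perimeter.
   Context: A polygon is a lattice polygon if all its vertices lie on the integer lattice $\mathbb{Z}^2$. A polygon is equable if its area equals its perimeter. Two polygons form an amicable pair if the area of each equals the perimeter of the other; an equable polygon paired with itself is allowed as an (trivial) amicable pair, and $P$, $Q$ need not be distinct. *)

(* Defs.v *)
From Stdlib Require Import Reals ZArith List Lra.
Import ListNotations.
Open Scope R_scope.

Definition lpoint : Type := (Z * Z)%type.

Definition px (p : lpoint) : R := IZR (fst p).
Definition py (p : lpoint) : R := IZR (snd p).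

Definition dist (p q : lpoint) : R :=
  sqrt ((px q - px p) ^ 2 + (py q - py p) ^ 2).

(** A polygon is given by its list of vertices in cyclic order.
    Edges join consecutive vertices, and the last vertex to the first. *)
Fixpoint edges_aux (first : lpoint) (l : list lpoint) : list (lpoint * lpoint) :=
  match l with
  | [] => []
  | [p] => [(p, first)]
  | p :: ((q :: _) as t) => (p, q) :: edges_aux first t
  end.

Definition edges (l : list lpoint) : list (lpoint * lpoint) :=
  match l with
  | [] => []
  | p :: _ => edges_aux p l
  end.

Definition perimeter (l : list lpoint) : R :=
  fold_right (fun e acc => dist (fst e) (snd e) + acc) 0 (edges l).

(** Area by the shoelace formula (correct for simple polygons, in particular
    for rhombuses). *)
Definition area (l : list lpoint) : R :=
  Rabs (fold_right (fun e acc => px (fst e) * py (snd e) - px (snd e) * py (fst e) + acc)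
          0 (edges l)) / 2.

(** A (non-degenerate) rhombus with vertices A, B, C, D in cyclic order:
    a parallelogram (B - A = C - D) with two adjacent sides of equal length
    (hence all four sides equal) and non-collinear adjacent sides. *)
Definition is_rhombus (A B C D : lpoint) : Prop :=
  (fst B - fst A = fst C - fst D)%Z /\ (snd B - snd A = snd C - snd D)%Z /\
  dist A B = dist A D /\
  ((fst B - fst A) * (snd D - snd A) - (snd B - snd A) * (fst D - fst A) <> 0)%Z.

Definition lattice_rhombus (P : list lpoint) : Prop :=
  exists A B C D, P = [A; B; C; D] /\ is_rhombus A B C D.

Definition equable (P : list lpoint) : Prop := area P = perimeter P.

Definition amicable (P Q : list lpoint) : Prop :=
  area P = perimeter Q /\ area Q = perimeter P.

(* Main.v *)
Require Import Defs.
From Stdlib Require Import Reals ZArith List.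
From Stdlib Require Import Lra Lia.
Import ListNotations.
Open Scope R_scope.
Import ListNotations.


Lemma sqpos (x : Z) : x <> 0%Z -> (0 < x*x)%Z.
Proof. intros h. destruct (Z.lt_total x 0) as [h1|[h1|h1]].
  - apply Z.mul_neg_neg; auto. - contradiction. - apply Z.mul_pos_pos; auto. Qed.

Lemma rhombus_data P : lattice_rhombus P -> exists n m D : Z,
  (0 < n)%Z /\ m <> 0%Z /\ (m*m + D*D = n*n)%Z /\
  area P = IZR (Z.abs m) /\ perimeter P = 4 * sqrt (IZR n).
Proof.
  intros (A & B & C & D & -> & H1 & H2 & H3 & H4).
  destruct A as [a1 a2], B as [b1 b2], C as [c1 c2], D as [d1 d2]. simpl in *.
  assert (Ec1 : c1 = (b1 + d1 - a1)%Z) by lia.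
  assert (Ec2 : c2 = (b2 + d2 - a2)%Z) by lia. subst c1 c2.
  set (n := ((b1-a1)*(b1-a1) + (b2-a2)*(b2-a2))%Z).
  set (n' := ((d1-a1)*(d1-a1) + (d2-a2)*(d2-a2))%Z).
  assert (dAB : Defs.dist (a1,a2) (b1,b2) = sqrt (IZR n)).
  { unfold Defs.dist, px, py, n; simpl. f_equal. rewrite plus_IZR, !mult_IZR, !minus_IZR. ring. }
  assert (dAD : Defs.dist (a1,a2) (d1,d2) = sqrt (IZR n')).
  { unfold Defs.dist, px, py, n'; simpl. f_equal. rewrite plus_IZR, !mult_IZR, !minus_IZR. ring. }
  assert (Hn : n = n').
  { apply eq_IZR. apply sqrt_inj; [apply (IZR_le 0); unfold n; pose proof (Z.square_nonneg (b1-a1)); pose proof (Z.square_nonneg (b2-a2)); lia | apply (IZR_le 0); unfold n'; pose proof (Z.square_nonneg (d1-a1)); pose proof (Z.square_nonneg (d2-a2)); lia | rewrite <- dAB, <- dAD; exact H3]. }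
  exists n, ((b1 - a1) * (d2 - a2) - (b2 - a2) * (d1 - a1))%Z,
    ((b1-a1)*(d1-a1) + (b2-a2)*(d2-a2))%Z.
  split; [|split; [exact H4|split; [|split]]].
  - unfold n. pose proof (Z.square_nonneg (b1-a1)); pose proof (Z.square_nonneg (b2-a2)).
    destruct (Z.eq_dec (b1-a1) 0) as [e1|e1]; [destruct (Z.eq_dec (b2-a2) 0) as [e2|e2]|].
    + rewrite e1, e2 in H4. lia.
    + pose proof (sqpos _ e2). lia.
    + pose proof (sqpos _ e1). lia.
  - transitivity (n*n')%Z; [unfold n, n'; ring | rewrite Hn; reflexivity].
  - unfold area, edges, edges_aux, px, py; simpl.
    rewrite !minus_IZR, !plus_IZR.
    match goal with |- Rabs ?e / 2 = _ => replace e with (2 * (IZR ((b1 - a1) * (d2 - a2) - (b2 - a2) * (d1 - a1)))) end.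
    + rewrite Rabs_mult, Rabs_right by lra. rewrite Rabs_Zabs. lra.
    + rewrite !minus_IZR, !mult_IZR, !minus_IZR. ring.
  - unfold perimeter, edges, edges_aux; simpl.
    assert (e2 : Defs.dist (b1, b2) ((b1 + d1 - a1)%Z, (b2 + d2 - a2)%Z) = sqrt (IZR n')).
    { unfold Defs.dist, px, py, n'; simpl. f_equal. rewrite !plus_IZR, !mult_IZR, !minus_IZR, !plus_IZR. ring. }
    assert (e3 : Defs.dist ((b1 + d1 - a1)%Z, (b2 + d2 - a2)%Z) (d1,d2) = sqrt (IZR n)).
    { unfold Defs.dist, px, py, n; simpl. f_equal. rewrite !plus_IZR, !mult_IZR, !minus_IZR, !plus_IZR. ring. }
    assert (e4 : Defs.dist (d1,d2) (a1,a2) = sqrt (IZR n')).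
    { unfold Defs.dist, px, py, n'; simpl. f_equal. rewrite !plus_IZR, !mult_IZR, !minus_IZR. ring. }
    rewrite dAB, e2, e3, e4, <- Hn. ring.
Qed.

Section KeyZ.
Local Open Scope Z_scope.
Lemma sq_sqrt (x c : Z) : 0 <= x -> x*x = c -> Z.sqrt c * Z.sqrt c = c.
Proof. intros Hx <-. rewrite Z.sqrt_square; auto. Qed.

Lemma key_enum (x M N k j : Z) : 0 < x -> x*x = 16*M -> M < N ->
  16*M = 2*k*N - k*k -> 16*N = 2*j*M - j*j -> 1 <= k <= N -> 1 <= j <= M ->
  1 <= k <= 15 -> 9 <= j <= 128 -> False.
Proof.
  intros Hx HxM HMN Hk Hj Hk1 Hj1 Hkb Hjb.
  assert (HK : k = 1 \/ k = 2 \/ k = 3 \/ k = 4 \/ k = 5 \/ k = 6 \/ k = 7 \/ k = 8 \/ k = 9 \/ k = 10 \/ k = 11 \/ k = 12 \/ k = 13 \/ k = 14 \/ k = 15) by lia.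
  assert (HJ : j = 9 \/ j = 10 \/ j = 11 \/ j = 12 \/ j = 13 \/ j = 14 \/ j = 15 \/ j = 16 \/ j = 17 \/ j = 18 \/ j = 19 \/ j = 20 \/ j = 21 \/ j = 22 \/ j = 23 \/ j = 24 \/ j = 25 \/ j = 26 \/ j = 27 \/ j = 28 \/ j = 29 \/ j = 30 \/ j = 31 \/ j = 32 \/ j = 33 \/ j = 34 \/ j = 35 \/ j = 36 \/ j = 37 \/ j = 38 \/ j = 39 \/ j = 40 \/ j = 41 \/ j = 42 \/ j = 43 \/ j = 44 \/ j = 45 \/ j = 46 \/ j = 47 \/ j = 48 \/ j = 49 \/ j = 50 \/ j = 51 \/ j = 52 \/ j = 53 \/ j = 54 \/ j = 55 \/ j = 56 \/ j = 57 \/ j = 58 \/ j = 59 \/ j = 60 \/ j = 61 \/ j = 62 \/ j = 63 \/ j = 64 \/ j = 65 \/ j = 66 \/ j = 67 \/ j = 68 \/ j = 69 \/ j = 70 \/ j = 71 \/ j = 72 \/ j = 73 \/ j = 74 \/ j = 75 \/ j = 76 \/ j = 77 \/ j = 78 \/ j = 79 \/ j = 80 \/ j = 81 \/ j = 82 \/ j = 83 \/ j = 84 \/ j = 85 \/ j = 86 \/ j = 87 \/ j = 88 \/ j = 89 \/ j = 90 \/ j = 91 \/ j = 92 \/ j = 93 \/ j = 94 \/ j = 95 \/ j = 96 \/ j = 97 \/ j = 98 \/ j = 99 \/ j = 100 \/ j = 101 \/ j = 102 \/ j = 103 \/ j = 104 \/ j = 105 \/ j = 106 \/ j = 107 \/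 j = 108 \/ j = 109 \/ j = 110 \/ j = 111 \/ j = 112 \/ j = 113 \/ j = 114 \/ j = 115 \/ j = 116 \/ j = 117 \/ j = 118 \/ j = 119 \/ j = 120 \/ j = 121 \/ j = 122 \/ j = 123 \/ j = 124 \/ j = 125 \/ j = 126 \/ j = 127 \/ j = 128) by lia.
  destruct HK as [HK|[HK|[HK|[HK|[HK|[HK|[HK|[HK|[HK|[HK|[HK|[HK|[HK|[HK|HK]]]]]]]]]]]]]];
  subst k;
  repeat (destruct HJ as [HJ|HJ]; [subst j; first [lia | 
    match goal with
    | H1 : 16*M = 2*?kv*N - _, H2 : 16*N = 2*?jv*M - _ |- _ =>
      let c := eval vm_compute in (16*(kv*(8*kv+jv*jv)/(2*(jv*kv-64)))) in
      assert (Hc : x*x = c) by lia;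
      apply sq_sqrt in Hc; [vm_compute in Hc; discriminate | lia]
    end] |]); subst j; lia.
Qed.

Lemma key (x y M N D1 D2 : Z) : 0 < x -> 0 < y -> x*x = 16*M -> y*y = 16*N ->
  x*x + D1*D1 = N*N -> y*y + D2*D2 = M*M -> M < N -> False.
Proof.
  intros Hx Hy HxM HyN H1 H2 HMN.
  assert (Ha : Z.abs D1 * Z.abs D1 = D1 * D1) by (destruct (Z.abs_spec D1) as [[_ ->]|[_ ->]]; ring).
  assert (Hb : Z.abs D2 * Z.abs D2 = D2 * D2) by (destruct (Z.abs_spec D2) as [[_ ->]|[_ ->]]; ring).
  pose proof (Z.abs_nonneg D1) as Ha0. pose proof (Z.abs_nonneg D2) as Hb0.
  set (a := Z.abs D1) in *. set (b := Z.abs D2) in *. clearbody a b.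
  assert (Hxx : 0 < x*x) by (apply Z.mul_pos_pos; lia).
  assert (Hyy : 0 < y*y) by (apply Z.mul_pos_pos; lia).
  assert (HM0 : 0 < M) by lia. assert (HN0 : 0 < N) by lia.
  assert (HaN : a < N).
  { destruct (Z_lt_ge_dec a N) as [h|h]; auto. assert (a*a >= N*N) by (apply Z.le_ge, Z.mul_le_mono_nonneg; lia). lia. }
  assert (HbM : b < M).
  { destruct (Z_lt_ge_dec b M) as [h|h]; auto. assert (b*b >= M*M) by (apply Z.le_ge, Z.mul_le_mono_nonneg; lia). lia. }
  set (k := N - a). set (j := M - b).
  assert (Hk : 16*M = 2*k*N - k*k) by (unfold k; rewrite <- HxM; lia).
  assert (Hj : 16*N = 2*j*M - j*j) by (unfold j; rewrite <- HyN; lia).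
  assert (Hk1 : 1 <= k <= N) by (unfold k; lia).
  assert (Hj1 : 1 <= j <= M) by (unfold j; lia).
  clearbody k j. clear H1 H2 Ha Hb Hxx Hyy.
  assert (Hk16 : k <= 15).
  { destruct (Z_le_gt_dec k 15) as [h|h]; auto.
    assert (k*(2*N-k) >= 16*(2*N-k)) by (apply Z.le_ge, Z.mul_le_mono_nonneg_r; lia). lia. }
  assert (HN8 : N <= 8*M).
  { assert ((k-1)*(2*N-k-1) >= 0) by (apply Z.le_ge, Z.mul_nonneg_nonneg; lia). lia. }
  assert (Hj128 : j <= 128).
  { assert (j*(2*M-j) >= j*M) by (apply Z.le_ge, Z.mul_le_mono_nonneg_l; lia).
    destruct (Z_le_gt_dec j 128) as [h|h]; auto.
    assert (j*M >= 129*M) by (apply Z.le_ge, Z.mul_le_mono_nonneg_r; lia). lia. }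
  assert (Hj9 : 9 <= j).
  { destruct (Z_le_gt_dec 9 j) as [h|h]; auto.
    assert (j*M <= 8*M) by (apply Z.mul_le_mono_nonneg_r; lia).
    assert (0 <= j*j) by nia. lia. }
  eapply (key_enum x M N k j); eauto; lia.
Qed.

End KeyZ.

Theorem mainTheorem1 (P Q : list lpoint) :
  lattice_rhombus P -> lattice_rhombus Q -> amicable P Q ->
  equable P /\ equable Q.
Proof.
  intros HP HQ [H1 H2].
  destruct (rhombus_data P HP) as (nP & mP & DP & nP0 & mP0 & EP & AP & PP).
  destruct (rhombus_data Q HQ) as (nQ & mQ & DQ & nQ0 & mQ0 & EQ & AQ & PQ).
  unfold equable. rewrite AP, PP, AQ, PQ in *.
  set (x := Z.abs mP) in *. set (y := Z.abs mQ) in *.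
  assert (x0 : (0 < x)%Z) by (unfold x; lia).
  assert (y0 : (0 < y)%Z) by (unfold y; lia).
  assert (Ex : (x*x = mP*mP)%Z) by (unfold x; destruct (Z.abs_spec mP) as [[_ ->]|[_ ->]]; ring).
  assert (Ey : (y*y = mQ*mQ)%Z) by (unfold y; destruct (Z.abs_spec mQ) as [[_ ->]|[_ ->]]; ring).
  assert (Sx : (x*x = 16*nQ)%Z).
  { apply eq_IZR. rewrite mult_IZR, mult_IZR, H1.
    replace (4 * sqrt (IZR nQ) * (4 * sqrt (IZR nQ))) with (16 * (sqrt (IZR nQ) * sqrt (IZR nQ))) by ring.
    rewrite sqrt_sqrt; [reflexivity | apply (IZR_le 0); lia]. }
  assert (Sy : (y*y = 16*nP)%Z).
  { apply eq_IZR. rewrite mult_IZR, mult_IZR, H2.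
    replace (4 * sqrt (IZR nP) * (4 * sqrt (IZR nP))) with (16 * (sqrt (IZR nP) * sqrt (IZR nP))) by ring.
    rewrite sqrt_sqrt; [reflexivity | apply (IZR_le 0); lia]. }
  assert (Hn : nP = nQ).
  { destruct (Z.lt_total nQ nP) as [h|[h|h]]; [exfalso|congruence|exfalso].
    - apply (key x y nQ nP DP DQ); auto; lia.
    - apply (key y x nP nQ DQ DP); auto; lia. }
  rewrite Hn in *. split; assumption.
Qed.
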